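(* Let $G$ be a finite group and let $H\leq G$. Consider the square matrix \[ \bigl( |P\backslash G /Q| \bigr)_{P,Q}, \] whose rows and columns are indexed by the $G$-conjugacy classes of subgroups of $H$ (with $P,Q$ representatives of these classes), and whose $(P,Q)$-entry is the number of $(P,Q)$-double cosets $PgQ$, $g\in G$. Then the rank of this matrix (over $\mathbb{Q}$) is equal to the number of $G$-conjugacy classes of cyclic subgroups of $H$.
   Context: Two subgroups $P,Q\leq H$ are $G$-conjugate if $Q=gPg^{-1}$ for some $g\in G$. The number $|P\backslash G/Q|$ depends only on the $G$-conjugacy classes of $P$ and $Q$. *)

(* Defs.v *)
From mathcomp Require Import all_boot all_order all_fingroup all_solvable all_algebra.
Set Implicit Arguments. Unset Strict Implicit. Unset Printing Implicit Defensive.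
Import GRing.Theory.
Local Open Scope group_scope.

Definition double_cosets (gT : finGroupType) (P Q G : {set gT}) : {set {set gT}} :=
  [set P :* g * Q | g in G].

Definition subgroup_classes (gT : finGroupType) (G H : {set gT})
    (C : {group gT} -> bool) : {set {set {set gT}}} :=
  [set (gval P) :^: G | P : {group gT} in [pred P : {group gT} | (P \subset H) && C P]].

Definition class_rep (gT : finGroupType) (K : {set {set gT}}) : {set gT} :=
  odflt set0 [pick P in K].

Definition double_coset_matrix (gT : finGroupType) (G H : {set gT}) :
    'M[rat]_(#|subgroup_classes G H predT|) :=
  \matrix_(i, j)
     (#|double_cosets (class_rep (enum_val i)) (class_rep (enum_val j)) G|)%:R%R.

(* Main.v *)
Require Import Defs.
From mathcomp Require Import all_boot all_order all_fingroup all_solvable all_algebra.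
Set Implicit Arguments. Unset Strict Implicit. Unset Printing Implicit Defensive.
Local Open Scope group_scope.
Notation "m ** n" := (muln m n) (at level 40, left associativity).

Section DC.
Variable gT : finGroupType.
Implicit Types (G P Q : {group gT}).

Lemma dcE P Q g : P :* g * Q = P * (g *: Q).
Proof. by rewrite mulgA. Qed.

Lemma card_dc P Q g :
  #|P :* g * Q| ** #|P :&: Q :^ g^-1| = (#|P| * #|Q|)%N.
Proof.
have ->: P :* g * Q = (P * Q :^ g^-1) :* g.
  rewrite conjsgE invgK -!mulgA; congr (_ * _).
  by rewrite !mulgA -[_ * [set g^-1] * [set g]]mulgA mulg_set1 mulVg mulg1.
by rewrite (card_rcoset _ g) -(cardJg Q g^-1) (mul_cardG P (Q :^ g^-1)%G).
Qed.

Lemma dc_fiber G P Q g0 : P \subset G -> Q \subset G -> g0 \in G ->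
  [set g | (g \in G) && (P :* g * Q == P :* g0 * Q)] = P :* g0 * Q.
Proof.
move=> sPG sQG Gg0; apply/setP => g; rewrite !inE.
apply/idP/idP.
  case/andP=> _ /eqP <-; apply/mulsgP; exists g 1; rewrite ?group1 ?mulg1 //.
  by rewrite mem_rcoset mulgV group1.
case/mulsgP=> y q; rewrite mem_rcoset => Py Qq ->.
have [p Pp ->] : exists2 p, p \in P & y = p * g0 by exists (y * g0^-1); rewrite ?mulgKV.
have ->: p * g0 * q \in G.
  have Gp := subsetP sPG p Pp; have Gq := subsetP sQG q Qq.
  by apply: groupM => //; apply: groupM.
rewrite /= !rcosetM (rcoset_id Pp).
by rewrite -mulgA lcoset_id.
Qed.

Lemma dc_count G P Q : P \subset G -> Q \subset G ->
  #|double_cosets P Q G| ** (#|P| ** #|Q|) =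
  \sum_(x in P) #|[set g in G | x \in Q :^ g]|.
Proof.
move=> sPG sQG.
transitivity (\sum_(g in G) #|P :&: Q :^ g^-1|).
  rewrite (partition_big (fun g => P :* g * Q) (mem (double_cosets P Q G))) /=; last first.
    by move=> g Gg; apply: imset_f.
  rewrite -sum_nat_const; apply: eq_bigr => _ /imsetP[g0 Gg0 ->].
  have Hc g : P :* g * Q = P :* g0 * Q -> #|P :&: Q :^ g^-1| = (#|P| ** #|Q|) %/ #|P :* g0 * Q|.
    move=> e; have := card_dc P Q g; rewrite e => <-.
    rewrite mulKn //; apply/card_gt0P; exists g0; apply/mulsgP; exists g0 1; rewrite ?group1 ?mulg1 //.
    by rewrite mem_rcoset mulgV group1.
  rewrite (eq_bigr (fun _ => (#|P| ** #|Q|) %/ #|P :* g0 * Q|)); last by move=> g /andP[_ /eqP/Hc].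
  rewrite sum_nat_cond_const dc_fiber // [RHS]mulnC divnK //.
  by rewrite -(card_dc P Q g0) dvdn_mulr.
rewrite (reindex_inj invg_inj) /=.
transitivity (\sum_(g in G) #|P :&: Q :^ g|).
  by apply: eq_big => [g|g _]; rewrite ?groupV ?invgK.
transitivity (\sum_(g in G) \sum_(x in P) (x \in Q :^ g : nat)).
  apply: eq_bigr => g _; rewrite -sum1_card big_mkcond [RHS]big_mkcond /=.
  by apply: eq_bigr => x _; rewrite inE; case: (x \in P); case: (x \in Q :^ g).
rewrite exchange_big; apply: eq_bigr => x _.
rewrite -sum1_card big_mkcond [RHS]big_mkcond /=.
by apply: eq_bigr => g _; rewrite inE; case: (g \in G); case: (x \in Q :^ g).
Qed.
End DC.
Section Cls.
Variables (gT : finGroupType) (G H : {group gT}).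
Hypothesis sHG : H \subset G.

Lemma class_spec (C : {group gT} -> bool) K : K \in subgroup_classes G H C ->
  exists2 P0 : {group gT}, (P0 \subset H) && C P0 & K = P0 :^: G.
Proof. by case/imsetP=> P0; rewrite inE => HP ->; exists P0. Qed.

Lemma conj_class (A : {set gT}) y : y \in G -> (A :^ y) :^: G = A :^: G.
Proof. by move=> Gy; rewrite conjugates_conj lcoset_id. Qed.

Lemma self_class (A : {set gT}) : A \in A :^: G.
Proof. by apply/imsetP; exists 1; rewrite ?group1 ?conjsg1. Qed.

Lemma rep_spec C K : K \in subgroup_classes G H C ->
  exists P0 : {group gT}, exists2 y, y \in G &
    [/\ P0 \subset H, C P0, class_rep K = P0 :^ y & K = P0 :^: G].
Proof.
case/class_spec=> P0 /andP[sP0 CP0] ->; exists P0.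
rewrite /class_rep; case: pickP => [R | none]; last first.
  by have := none P0; rewrite self_class.
by case/imsetP=> y Gy ->; exists y.
Qed.

Lemma rep_class C K : K \in subgroup_classes G H C -> K = class_rep K :^: G.
Proof.
by case/rep_spec=> P0 [y Gy [_ _ -> ->]]; rewrite conj_class.
Qed.

Lemma rep_conj C K (A : {set gT}) : K \in subgroup_classes G H C -> A \in K ->
  exists2 y, y \in G & class_rep K = A :^ y.
Proof.
case/rep_spec=> P0 [y Gy [_ _ -> eK]]; rewrite eK => /imsetP[z Gz ->].
by exists (z^-1 * y); rewrite ?groupM ?groupV // conjsgM conjsgK.
Qed.

Lemma rep_group_set C K : K \in subgroup_classes G H C -> group_set (class_rep K).
Proof. by case/rep_spec=> P0 [y Gy [_ _ -> _]]; apply: groupP. Qed.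

Lemma rep_sub C K : K \in subgroup_classes G H C -> class_rep K \subset G.
Proof.
case/rep_spec=> P0 [y Gy [sP0 _ -> _]].
by rewrite sub_conjg conjGid ?groupV // (subset_trans sP0).
Qed.

Definition Ccl := subgroup_classes G H (fun P : {group gT} => cyclic P).
Definition cls (x : gT) := <[x]> :^: G.

Lemma cls_in C K x : K \in subgroup_classes G H C -> x \in class_rep K -> cls x \in Ccl.
Proof.
case/rep_spec=> P0 [y Gy [sP0 _ -> _]]; rewrite mem_conjg => Px.
apply/imsetP; exists <[x ^ y^-1]>%G; first by rewrite inE cycle_cyclic cycle_subG (subsetP sP0).
by rewrite /cls /= cycleJ conj_class ?groupV.
Qed.

Lemma rep_cyclic K : K \in Ccl -> cyclic (class_rep K).
Proof. by case/rep_spec=> P0 [y Gy [_ cP0 -> _]]; rewrite cyclicJ. Qed.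

Definition phiN (R Q : {set gT}) := #|[set g in G | R \subset Q :^ g]|.

Lemma phi_conj R Q y : y \in G -> phiN (R :^ y) Q = phiN R Q.
Proof.
move=> Gy; rewrite /phiN -[RHS](card_rcoset _ y); apply: eq_card => g.
by rewrite mem_rcoset !inE groupMr ?groupV // sub_conjg -conjsgM.
Qed.

Lemma entry_nat (P Q : {group gT}) : P \subset G -> Q \subset G ->
  (forall x, x \in P -> cls x \in Ccl) ->
  #|double_cosets P Q G| ** (#|P| ** #|Q|) =
  \sum_(l < #|Ccl|) #|[set x in P | cls x == enum_val l]| ** phiN (class_rep (enum_val l)) Q.
Proof.
move=> sPG sQG HP; rewrite dc_count //.
transitivity (\sum_(x in P) phiN <[x]> Q).
  by apply: eq_bigr => x _; apply: eq_card => g; rewrite !inE cycle_subG.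
transitivity (\sum_(x in P) \sum_(l < #|Ccl|)
    ((cls x == enum_val l) : nat) ** phiN (class_rep (enum_val l)) Q).
  apply: eq_bigr => x Px; have Cx := HP x Px.
  rewrite (bigD1 (enum_rank_in Cx (cls x))) //= enum_rankK_in // eqxx mul1n.
  rewrite big1 ?addn0.
    have [y Gy ->] := rep_conj Cx (self_class <[x]>).
    by rewrite phi_conj.
  move=> l ne; case: eqP => // e; case/eqP: ne; apply: enum_val_inj.
  by rewrite enum_rankK_in.
rewrite exchange_big; apply: eq_bigr => l _; rewrite -big_distrl /=; congr (_ ** _).
rewrite -sum1_card big_mkcond [RHS]big_mkcond /=; apply: eq_bigr => x _.
by rewrite inE; case: (x \in P); case: (cls x == _).
Qed.

End Cls.

Section Main.
Import GRing.Theory Num.Theory.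
Local Open Scope ring_scope.
Variables (gT : finGroupType) (G H : {group gT}).
Hypothesis sHG : (H \subset G)%g.

Definition aco (P : {set gT}) (l : 'I_#|Ccl G H|) : rat :=
  #|[set x in P | cls G x == enum_val l]|%:R / #|P|%:R.
Definition fco (l : 'I_#|Ccl G H|) (Q : {set gT}) : rat :=
  (phiN G (class_rep (enum_val l)) Q)%:R / #|Q|%:R.

Lemma entry_rat (P Q : {group gT}) : (P \subset G)%g -> (Q \subset G)%g ->
  (forall x, x \in P -> cls G x \in Ccl G H) ->
  (#|double_cosets P Q G|%:R : rat) = \sum_(l < #|Ccl G H|) aco P l * fco l Q.
Proof.
move=> sPG sQG HP; have e := entry_nat sPG sQG HP.
have nP : (#|P|%:R : rat) != 0 by rewrite pnatr_eq0 -lt0n cardG_gt0.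
have nQ : (#|Q|%:R : rat) != 0 by rewrite pnatr_eq0 -lt0n cardG_gt0.
rewrite (eq_bigr (fun l => (#|[set x in P | cls G x == enum_val l]| ** phiN G (class_rep (enum_val l)) Q)%:R / (#|P|%:R * #|Q|%:R))); last first.
  by move=> l _; rewrite /aco /fco mulf_div natrM.
by rewrite -mulr_suml -natr_sum -e !natrM mulfK // mulf_neq0.
Qed.

Lemma CclAll K : K \in Ccl G H -> K \in subgroup_classes G H predT.
Proof.
by case/class_spec=> P0 /andP[sP0 _] ->; apply/imsetP; exists P0; rewrite ?inE ?sP0.
Qed.

Lemma entryK C1 C2 K L : K \in subgroup_classes G H C1 -> L \in subgroup_classes G H C2 ->
  (#|double_cosets (class_rep K) (class_rep L) G|%:R : rat) =
  \sum_(l < #|Ccl G H|) aco (class_rep K) l * fco l (class_rep L).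
Proof.
move=> HK HL.
exact: (entry_rat (P := Group (rep_group_set HK)) (Q := Group (rep_group_set HL))
   (rep_sub sHG HK) (rep_sub sHG HL) (fun x => cls_in HK)).
Qed.

Lemma unit_of_ker n (X : 'M[rat]_n) :
  (forall v : 'rV_n, v *m X = 0 -> v = 0) -> X \in unitmx.
Proof.
move=> Hv; rewrite -row_free_unit -kermx_eq0; apply/eqP/row_matrixP => i.
by rewrite row0; apply: Hv; rewrite -row_mul mulmx_ker row0.
Qed.

Lemma rank_sub m n (r : 'I_m -> 'I_n) (M : 'M[rat]_n) :
  (\rank (rowsub r (colsub r M)) <= \rank M)%N.
Proof.
rewrite rowsubE (leq_trans (mxrankM_maxr _ _)) //.
have ->: colsub r M = (rowsub r M^T)^T by apply/matrixP => i j; rewrite !mxE.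
by rewrite mxrank_tr rowsubE (leq_trans (mxrankM_maxr _ _)) // mxrank_tr.
Qed.

Lemma crep_inj (k l : 'I_#|Ccl G H|) y : y \in G ->
  class_rep (enum_val k) = class_rep (enum_val l) :^ y -> k = l.
Proof.
move=> Gy e; apply: enum_val_inj.
by rewrite (rep_class (enum_valP k)) (rep_class (enum_valP l)) e conj_class.
Qed.

Lemma Aunit :
  (\matrix_(k, l) aco (class_rep (enum_val k)) l : 'M[rat]_#|Ccl G H|) \in unitmx.
Proof.
apply: unit_of_ker => v Hv; apply/eqP; apply/negPn/negP => nz.
case: (pickP (fun k => v 0 k != 0)) => [k0 Hk0|none]; last first.
  by case/eqP: nz; apply/rowP => k; rewrite [RHS]mxE; apply/eqP/negbFE; rewrite none.
case: (@arg_maxnP _ k0 (fun k => v 0 k != 0)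
   (fun k => #|class_rep (enum_val k)|) Hk0) => l Hl maxl.
have := congr1 (fun w : 'rV_ _ => w 0 l) Hv.
rewrite mxE [RHS]mxE (bigD1 l) //= big1 ?addr0; last first.
  move=> k nkl; rewrite mxE; case: (eqVneq (v 0 k) 0) => [->|vk]; first by rewrite mul0r.
  rewrite /aco (_ : #|_| = 0%N) ?mul0r ?mulr0 //.
  apply/eqP; rewrite cards_eq0; apply/eqP/setP => x; rewrite !inE.
  apply/negbTE/negP => /andP[xk /eqP ex].
  have Hxl : (<[x]>%g \in enum_val l) by rewrite -ex self_class.
  have [y Gy ey] := rep_conj (enum_valP l) Hxl.
  have sxk : (<[x]> \subset Group (rep_group_set (enum_valP k)))%g by rewrite cycle_subG.
  have mk := maxl k vk.
  have e2 : <[x]>%g = class_rep (enum_val k).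
    apply/eqP; rewrite eqEcard sxk /=.
    by rewrite -(cardJg <[x]> y) -ey; exact: mk.
  case/eqP: nkl; apply: enum_val_inj.
  by rewrite (rep_class (enum_valP k)) -e2 -ex.
rewrite mxE; move/eqP; rewrite mulf_eq0 (negbTE Hl) /=; apply/negP.
have /cyclicP[x ex] := rep_cyclic (enum_valP l).
have Hx : x \in [set x in class_rep (enum_val l) | cls G x == enum_val l].
  rewrite inE ex cycle_id /= /cls -ex -(rep_class (enum_valP l)) //.
rewrite /aco mulf_neq0 // ?invr_eq0 pnatr_eq0 -lt0n card_gt0; apply/set0Pn.
  by exists x.
by exists x; case/setIdP: Hx.
Qed.

Lemma Funit :
  (\matrix_(k, l) fco k (class_rep (enum_val l)) : 'M[rat]_#|Ccl G H|) \in unitmx.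
Proof.
rewrite -unitmx_tr; apply: unit_of_ker => v Hv; apply/eqP; apply/negPn/negP => nz.
case: (pickP (fun k => v 0 k != 0)) => [k0 Hk0|none]; last first.
  by case/eqP: nz; apply/rowP => k; rewrite [RHS]mxE; apply/eqP/negbFE; rewrite none.
case: (@arg_maxnP _ k0 (fun k => v 0 k != 0)
   (fun k => #|class_rep (enum_val k)|) Hk0) => k Hk maxk.
have := congr1 (fun w : 'rV_ _ => w 0 k) Hv.
rewrite mxE [RHS]mxE (bigD1 k) //= big1 ?addr0; last first.
  move=> l nlk; rewrite !mxE; case: (eqVneq (v 0 l) 0) => [->|vl]; first by rewrite mul0r.
  rewrite /fco (_ : phiN _ _ _ = 0%N) ?mul0r ?mulr0 //.
  apply/eqP; rewrite cards_eq0; apply/eqP/setP => g; rewrite !inE.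
  apply/negbTE/negP => /andP[Gg skl].
  have e2 : class_rep (enum_val k) = class_rep (enum_val l) :^ g.
    apply/eqP; rewrite eqEcard skl cardJg; exact: maxk l vl.
  by case/eqP: nlk; apply/esym/(crep_inj Gg).
rewrite !mxE; move/eqP; rewrite mulf_eq0 (negbTE Hk) /=; apply/negP.
have Cx : (1%g : gT) \in [set g in G | class_rep (enum_val k) \subset class_rep (enum_val k) :^ g].
  by rewrite inE group1 conjsg1 subxx.
rewrite /fco mulf_neq0 // ?invr_eq0 pnatr_eq0 -lt0n card_gt0; apply/set0Pn.
  by exists 1%g.
by case/andP: (rep_group_set (enum_valP k)) => H1 _; exists 1%g.
Qed.

End Main.

Local Open Scope ring_scope.
Import GRing.Theory Num.Theory.

Theorem theorem1p1 (gT : finGroupType) (G H : {group gT}) :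
  H \subset G ->
  \rank (double_coset_matrix G H) =
  #|subgroup_classes G H (fun P : {group gT} => cyclic P)|.
Proof.
move=> sHG.
pose A := (\matrix_(i, l) aco (class_rep (enum_val (i : 'I_#|subgroup_classes G H predT|))) l
   : 'M[rat]_(#|subgroup_classes G H predT|, #|Ccl G H|)).
pose F := (\matrix_(l, j) fco (l : 'I_#|Ccl G H|) (class_rep (enum_val (j : 'I_#|subgroup_classes G H predT|)))
   : 'M[rat]_(#|Ccl G H|, #|subgroup_classes G H predT|)).
have eM : double_coset_matrix G H = A *m F.
  apply/matrixP => i j; rewrite !mxE (entryK sHG (enum_valP i) (enum_valP j)).
  by apply: eq_bigr => l _; rewrite !mxE.
apply/eqP; rewrite eqn_leq; apply/andP; split.
  by rewrite eM (leq_trans (mxrankM_maxl _ _)) ?rank_leq_col.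
have sub (k : 'I_#|Ccl G H|) : enum_val k \in subgroup_classes G H predT.
  exact: CclAll (enum_valP k).
pose r (k : 'I_#|Ccl G H|) : 'I_#|subgroup_classes G H predT| :=
  enum_rank_in (sub k) (enum_val k).
have er k : enum_val (r k) = enum_val k by rewrite enum_rankK_in.
have eM' : rowsub r (colsub r (double_coset_matrix G H)) =
   (\matrix_(k, l) aco (class_rep (enum_val (k : 'I_#|Ccl G H|))) (l : 'I_#|Ccl G H|)) *m
   (\matrix_(k, l) fco (k : 'I_#|Ccl G H|) (class_rep (enum_val (l : 'I_#|Ccl G H|)))).
  apply/matrixP => k l; rewrite !mxE !er (entryK sHG (enum_valP k) (enum_valP l)).
  by apply: eq_bigr => i _; rewrite !mxE.
have := rank_sub r (double_coset_matrix G H).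
by rewrite eM' mxrank_unit // unitmx_mul Aunit Funit.
Qed.
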